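(* For every $G\subseteq A$ and every $\varphi\in\mathcal{L}_{CoRGAL}$, the formula $\langle[G]\rangle\langle[G]\rangle\varphi\rightarrow[\langle A\setminus G\rangle]\varphi$ is valid.
   Context: Fix a finite set $A$ of agents and a countable set $P$ of propositional variables. The language $\mathcal{L}_{CoRGAL}$ is given by $\varphi ::= p \mid \neg\varphi \mid (\varphi\wedge\varphi) \mid K_a\varphi \mid [\varphi]\varphi \mid [G,\varphi]\varphi \mid [\langle G\rangle]\varphi$ with $p\in P$, $a\in A$, $G\subseteq A$. $\mathcal{L}_{EL}$ is the fragment built only from $p,\neg,\wedge,K_a$. Duals: $\langle\psi\rangle\varphi:=\neg[\psi]\neg\varphi$, $\langle[G]\rangle\varphi:=\neg[\langle G\rangle]\neg\varphi$. For $G\subseteq A$, $\mathcal{L}^G_{EL}$ is the set of formulas $\bigwedge_{i\in G}K_i\varphi_i$ with each $\varphi_i\in\mathcal{L}_{EL}$; $\psi_G,\chi_G$ range over $\mathcal{L}^G_{EL}$. Epistemic models $M=(W,\sim,V)$: $W\neq\emptyset$, each $\sim_a$ an equivalence relation, $V:P\to\mathcal{P}(W)$; $M^\varphi$ is the restriction of $M$ to $\{v:(M,v)\models\varphi\}$. Semantics: standard for $p,\neg,\wedge,K_a$; $(M,w)\models[\varphi]\psi$ iff $(M,w)\models\varphi$ implies $(M^\varphi,w)\models\psi$; $(M,w)\models[G,\chi]\varphi$ iff $(M,w)\models\chi$ and for all $\psi_G$, $(M,w)\models[\psi_G\wedge\chi]\varphi$; $(M,w)\models[\langle G\rangle]\varphi$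 iff for every $\psi_G$ there is $\chi_{A\setminus G}$ with $(M,w)\models\psi_G\to\langle\psi_G\wedge\chi_{A\setminus G}\rangle\varphi$. Thus $(M,w)\models\langle[G]\rangle\varphi$ iff there is $\psi_G$ such that for all $\chi_{A\setminus G}$, $(M,w)\models\psi_G\wedge[\psi_G\wedge\chi_{A\setminus G}]\varphi$. A formula is valid if true at every pointed model. *)

(* Defs.v *)
From mathcomp Require Import all_boot.
Set Implicit Arguments. Unset Strict Implicit. Unset Printing Implicit Defensive.

(* Propositional variables: the countable set P is taken to be nat. *)
Definition prop_var := nat.

Section Syntax.
Variable A : finType.

Inductive form : Type :=
| Var  : prop_var -> form
| Neg  : form -> form
| And  : form -> form -> form
| K    : A -> form -> form
| Ann  : form -> form -> form
| GAnn : {set A} -> form -> form -> form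
| Coal : {set A} -> form -> form.

Inductive elform : Type :=
| EVar : prop_var -> elform
| ENeg : elform -> elform
| EAnd : elform -> elform -> elform
| EK   : A -> elform -> elform.

Definition Imp (phi psi : form) : form := Neg (And phi (Neg (psi))).
Definition DAnn (psi phi : form) : form := Neg (Ann psi (Neg phi)).
Definition DCoal (G : {set A}) (phi : form) : form := Neg (Coal G (Neg phi)).
End Syntax.

Record model (A : finType) : Type := Model {
  W : Type;
  R : A -> W -> W -> Prop;
  R_refl : forall a x, R a x x;
  R_sym : forall a x y, R a x y -> R a y x;
  R_trans : forall a x y z, R a x y -> R a y z -> R a x z;
  V : prop_var -> W -> Prop
}.
Arguments W {A} m.
Arguments R {A} m a _ _.
Arguments V {A} m p _.

Definition restrict (A : finType) (M : model A) (S : W M -> Prop) : model A.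
Proof.
refine (@Model A {w : W M | S w}
          (fun a u v => R M a (proj1_sig u) (proj1_sig v)) _ _ _
          (fun p u => V M p (proj1_sig u))).
- by move=> a x; apply: R_refl.
- by move=> a x y; apply: R_sym.
- by move=> a x y z; apply: R_trans.
Defined.

Arguments restrict {A} M S.

Fixpoint sat_el (A : finType) (M : model A) (phi : elform A) (w : W M) : Prop :=
  match phi with
  | EVar p => V M p w
  | ENeg f => ~ @sat_el A M f w
  | EAnd f g => @sat_el A M f w /\ @sat_el A M g w
  | EK a f => forall v, R M a w v -> @sat_el A M f v
  end.

Arguments sat_el {A} M phi w.

(* A formula psi_G of L^G_EL = /\_{i in G} K_i phi_i is given by the family
   f : A -> elform A (phi_i := f i; only the values on G matter).
   Its truth: *)
Definition satG (A : finType) (M : model A) (G : {set A}) (f : A -> elform A)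
  (w : W M) : Prop :=
  forall i, i \in G -> sat_el M (EK i (f i)) w.

Arguments satG {A} M G f w.

Fixpoint sat (A : finType) (phi : form A) : forall M : model A, W M -> Prop :=
  match phi with
  | Var p => fun M w => V M p w
  | Neg f => fun M w => ~ @sat A f M w
  | And f g => fun M w => @sat A f M w /\ @sat A g M w
  | K a f => fun M w => forall v, R M a w v -> @sat A f M v
  | Ann psi f => fun M w =>
      forall H : @sat A psi M w, @sat A f (restrict M (@sat A psi M)) (exist _ w H)
  | GAnn G chi f => fun M w =>
      @sat A chi M w /\
      forall (psiG : A -> elform A) (H : satG M G psiG w /\ @sat A chi M w),
        @sat A f (restrict M (fun v => satG M G psiG v /\ @sat A chi M v)) (exist _ w H)
  | Coal G f => fun M w =>
      forall (psiG : A -> elform A) (Hpsi : satG M G psiG w),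
        exists (chi : A -> elform A) (Hchi : satG M (~: G) chi w),
          @sat A f (restrict M (fun v => satG M G psiG v /\ satG M (~: G) chi v))
                (exist _ w (conj Hpsi Hchi))
  end.

Arguments sat {A} phi M w.

Definition valid (A : finType) (phi : form A) : Prop :=
  forall (M : model A) (w : W M), sat phi M w.

(* Main.v *)
Require Import Defs.
From mathcomp Require Import all_boot.
From Stdlib Require Import Classical ProofIrrelevance.
Set Implicit Arguments.

Section S.
Variable A : finType.

Definition morph (M N : model A) (f : W M -> W N) :=
  (forall y, exists x, f x = y) /\
  (forall a x y, R M a x y <-> R N a (f x) (f y)) /\
  (forall p x, V M p x <-> V N p (f x)).

Lemma sat_el_morph M N f : morph M N f ->
  forall phi x, sat_el M phi x <-> sat_el N phi (f x).
Proof.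
move=> [Hs [HR HV]]; elim=> [p|g IH|g IHg h IHh|a g IH] x /=.
- exact: HV.
- by rewrite IH.
- by rewrite IHg IHh.
- split=> H v.
  + case: (Hs v)=> u <- Hv; rewrite -IH; apply: H; by rewrite HR.
  + move=> Hv; rewrite IH; apply: H; by rewrite -HR.
Qed.

Lemma restrict_morph M N f (P : W M -> Prop) (Q : W N -> Prop) :
  morph M N f -> (forall x, P x <-> Q (f x)) ->
  exists g : W (restrict M P) -> W (restrict N Q), morph _ _ g /\
    forall x H H', g (exist P x H) = exist Q (f x) H'.
Proof.
move=> [Hs [HR HV]] HPQ.
exists (fun u : W (restrict M P) => exist Q (f (proj1_sig u)) (proj1 (HPQ _) (proj2_sig u))).
split; last by move=> x H H'; congr exist; apply: proof_irrelevance.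
split; [|split].
- case=> y Hy; case: (Hs y) => x Ex; subst y.
  exists (exist P x (proj2 (HPQ x) Hy)); congr exist; apply: proof_irrelevance.
- by move=> a [x Hx] [y Hy] /=; apply: HR.
- by move=> p [x Hx] /=; apply: HV.
Qed.

Lemma satG_morph M N f : morph M N f ->
  forall G psi x, satG M G psi x <-> satG N G psi (f x).
Proof.
move=> Hm G psi x; split=> H i Hi.
- by rewrite -(sat_el_morph Hm (EK i (psi i))); apply: H.
- by rewrite (sat_el_morph Hm (EK i (psi i))); apply: H.
Qed.

Lemma sat_morph phi : forall M N f, morph M N f ->
  forall x, sat phi M x <-> sat phi N (f x).
Proof.
elim: phi => [p|g IH|g IHg h IHh|a g IH|psi IHpsi g IH|G chi IHchi g IH|G g IH] M N f Hm x /=.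
- by case: Hm => _ [_ HV]; apply: HV.
- by rewrite (IH _ _ _ Hm).
- by rewrite (IHg _ _ _ Hm) (IHh _ _ _ Hm).
- case: Hm => [Hs [HR HV]]; split=> H v.
  + case: (Hs v)=> u <- Hv; rewrite -(IH _ _ _ (conj Hs (conj HR HV))); apply: H; by rewrite HR.
  + move=> Hv; rewrite (IH _ _ _ (conj Hs (conj HR HV))); apply: H; by rewrite -HR.
- have HPQ : forall y, sat psi M y <-> sat psi N (f y) by move=> y; apply: IHpsi.
  case: (restrict_morph _ _ Hm HPQ) => h [Hh Eh].
  split=> H H1.
  + have H0 := proj2 (HPQ x) H1.
    by rewrite -(Eh x H0 H1) -(IH _ _ _ Hh); apply: H.
  + by rewrite (IH _ _ _ Hh) (Eh x H1 (proj1 (HPQ x) H1)); apply: H.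
- have Hc : forall y, sat chi M y <-> sat chi N (f y) by move=> y; apply: IHchi.
  split=> [[H1 H2]|[H1 H2]]; split; first by rewrite -Hc.
  + move=> ps Hp.
    have HPQ : forall y, (satG M G ps y /\ sat chi M y) <-> (satG N G ps (f y) /\ sat chi N (f y)).
      by move=> y; rewrite (satG_morph Hm) Hc.
    case: (restrict_morph _ (fun y => satG N G ps y /\ sat chi N y) Hm HPQ) => h [Hh Eh].
    have H0 := proj2 (HPQ x) Hp.
    by rewrite -(Eh x H0 Hp) -(IH _ _ _ Hh); apply: H2.
  + by rewrite Hc.
  + move=> ps Hp.
    have HPQ : forall y, (satG M G ps y /\ sat chi M y) <-> (satG N G ps (f y) /\ sat chi N (f y)).
      by move=> y; rewrite (satG_morph Hm) Hc.
    case: (restrict_morph _ (fun y => satG N G ps y /\ sat chi N y) Hm HPQ) => h [Hh Eh].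
    by rewrite (IH _ _ _ Hh) (Eh x Hp (proj1 (HPQ x) Hp)); apply: H2.
- split=> H ps Hp.
  + have Hp0 := proj2 (satG_morph Hm G ps x) Hp.
    case: (H ps Hp0) => ch [Hch Hs].
    have Hch' := proj1 (satG_morph Hm (~: G) ch x) Hch.
    exists ch, Hch'.
    have HPQ : forall y, (satG M G ps y /\ satG M (~: G) ch y) <-> (satG N G ps (f y) /\ satG N (~: G) ch (f y)).
      by move=> y; rewrite !(satG_morph Hm).
    case: (restrict_morph _ (fun y => satG N G ps y /\ satG N (~: G) ch y) Hm HPQ) => h [Hh Eh].
    by rewrite -(Eh x (conj Hp0 Hch) (conj Hp Hch')) -(IH _ _ _ Hh).
  + have Hp0 := proj1 (satG_morph Hm G ps x) Hp.
    case: (H ps Hp0) => ch [Hch Hs].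
    have Hch' := proj2 (satG_morph Hm (~: G) ch x) Hch.
    exists ch, Hch'.
    have HPQ : forall y, (satG M G ps y /\ satG M (~: G) ch y) <-> (satG N G ps (f y) /\ satG N (~: G) ch (f y)).
      by move=> y; rewrite !(satG_morph Hm).
    case: (restrict_morph _ (fun y => satG N G ps y /\ satG N (~: G) ch y) Hm HPQ) => h [Hh Eh].
    by rewrite (IH _ _ _ Hh) (Eh x (conj Hp Hch') (conj Hp0 Hch)).
Qed.

Definition EImp (a b : elform A) := ENeg (EAnd a (ENeg b)).

Lemma EImpE M a b v : sat_el M (EImp a b) v <-> (sat_el M a v -> sat_el M b v).
Proof. by rewrite /=; split=> H; [move=> Ha; apply: NNPP => Hb; apply: H|move=> [Ha Hb]; apply: Hb; apply: H]. Qed.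

Fixpoint relv (t phi : elform A) : elform A :=
  match phi with
  | EVar p => EImp t (EVar A p)
  | ENeg f => EImp t (ENeg (relv t f))
  | EAnd f g => EAnd (relv t f) (relv t g)
  | EK a f => EImp t (EK a (relv t f))
  end.

Lemma rel_ok M (P : W M -> Prop) t (HP : forall v, P v <-> sat_el M t v) phi :
  forall v, sat_el M (relv t phi) v <->
    (forall H : P v, sat_el (restrict M P) phi (exist P v H)).
Proof.
elim: phi => [p|f IH|f IHf g IHg|a f IH] v.
- rewrite [relv _ _]/= EImpE /=; split=> H.
  + by move=> Hv; apply: H; rewrite -HP.
  + by move=> Ht; apply: H; rewrite HP.
- rewrite [relv _ _]/= EImpE /=; split=> H.
  + move=> Hv Hf; apply: (H (proj1 (HP v) Hv)); rewrite IH => H'.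
    by have -> : H' = Hv by apply: proof_irrelevance.
  + by move=> Ht; rewrite IH => Hf; apply: (H (proj2 (HP v) Ht)); apply: Hf.
- rewrite /= IHf IHg; split; first by move=> [H1 H2] H; split; [apply: H1|apply: H2].
  by move=> H; split=> Hv; case: (H Hv).
- rewrite [relv _ _]/= EImpE /=; split=> H.
  + move=> Hv [u Hu] /= Ru; have := H (proj1 (HP v) Hv) u Ru; rewrite IH; by apply.
  + move=> Ht u Ru; rewrite IH => Hu; exact: (H (proj2 (HP v) Ht) (exist P u Hu) Ru).
Qed.

Definition ETop : elform A := EImp (EVar A 0) (EVar A 0).
Lemma ETopE M v : sat_el M ETop v.
Proof. by rewrite EImpE. Qed.

Definition bigK (h : A -> elform A) (s : seq A) : elform A :=
  foldr (fun i acc => EAnd (EK i (h i)) acc) ETop s.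

Lemma bigKE M h s v : sat_el M (bigK h s) v <-> (forall i, i \in s -> sat_el M (EK i (h i)) v).
Proof.
elim: s => [|j s IH] /=.
- by split=> // _; apply: ETopE.
- rewrite IH; split.
  + move=> [H1 H2] i; rewrite in_cons => /orP [/eqP ->|Hi]; [exact: H1|exact: H2].
  + move=> H; split; first by apply: H; rewrite mem_head.
    by move=> i Hi; apply: H; rewrite in_cons Hi orbT.
Qed.
End S.

Theorem mainTheorem5 (A : finType) (G : {set A}) (phi : form A) :
  valid (Imp (DCoal G (DCoal G phi)) (Coal (~: G) phi)).
Proof.
move=> M w /= [HX HY]; apply: HY => psi Hpsi.
apply: NNPP => HN; apply: HX => psiG HpsiG.
exists psi, Hpsi => HC; apply: HC => psi2 Hpsi2.
exists (fun _ => ETop A).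
have Ht : satG (restrict M (fun v => satG M G psiG v /\ satG M (~: G) psi v)) (~: G) (fun _ => ETop A) (exist _ w (conj HpsiG Hpsi)).
  by move=> i _ v _; apply: ETopE.
exists Ht => Hphi; apply: HN.
set th := fun v : W M => satG M G psiG v /\ satG M (~: G) psi v.
set tth := bigK (fun i => if i \in G then psiG i else psi i) (enum A).
have HP : forall v, th v <-> sat_el M tth v.
  move=> v; rewrite bigKE /th; split.
  - move=> [H1 H2] i _; case: ifP => Hi; first exact: H1.
    by apply: H2; rewrite inE Hi.
  - move=> H; split=> i Hi; have := H i (mem_enum _ i).
    + by rewrite Hi.
    + by move: Hi; rewrite inE => /negbTE ->.
set chi := fun i => EAnd (psiG i) (relv tth (psi2 i)).
set M1 := restrict M th.
set SY := fun v : W M => satG M (~: G) psi v /\ satG M (~: ~: G) chi v.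
have Ha : forall v, SY v -> th v.
  move=> v [H1 H2]; split=> // i Hi u Ru.
  by case: (H2 i (ltac:(by rewrite setCK)) u Ru).
have Hb : forall u1 : W M1, SY (sval u1) <-> satG M1 G psi2 u1.
  case=> v Hv /=; split.
  - move=> [_ H2] i Hi [u Hu] /= Ru.
    case: (H2 i (ltac:(by rewrite setCK)) u Ru) => _.
    by move/(rel_ok _ _ _ HP); apply.
  - move=> H; split; first exact: (proj2 Hv).
    move=> i; rewrite setCK => Hi u Ru; split; first exact: (proj1 Hv i Hi u Ru).
    apply/(rel_ok _ _ _ HP) => Hu; exact: (H i Hi (exist th u Hu) Ru).
have Hchi : satG M (~: ~: G) chi w.
  have := proj2 (Hb (exist th w (conj HpsiG Hpsi))) Hpsi2.
  by case.
exists chi, Hchi.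
set M2 := restrict M1 (fun v => satG M1 G psi2 v /\ satG M1 (~: G) (fun _ => ETop A) v).
set MY := restrict M SY.
pose f := fun u : W M2 => exist SY (sval (sval u)) (proj2 (Hb (sval u)) (proj1 (svalP u))).
have Hm : morph M2 MY f.
  split; last by split.
  case=> v Hv.
  pose u1 := exist th v (Ha v Hv) : W M1.
  have Hu1 : satG M1 G psi2 u1 /\ satG M1 (~: G) (fun _ => ETop A) u1.
    split; first exact: (proj1 (Hb u1) Hv).
    by move=> i _ x _; apply: ETopE.
  exists (exist _ u1 Hu1); rewrite /f /=; congr exist; apply: proof_irrelevance.
move/(@sat_morph _ phi _ _ _ Hm): Hphi.
rewrite /f /=.
match goal with |- sat _ _ (exist _ _ ?p) -> sat _ _ (exist _ _ ?q) =>
  have -> : p = q by apply: proof_irrelevance end.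
done.
Qed.
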